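(* Let $(X,d)$ be a compact geodesic metric space and let $f:X\to\mathbb{R}$ be Lipschitz. Then for every $(x,t)\in X\times(0,\infty)$ one has $|DQ_tf|(x)=\frac{D^+(x,t)}{t}$. Moreover, for every $x\in X$, \[ \frac{d}{dt}Q_tf(x)+\frac12|DQ_tf|^2(x)=0 \] for every $t\in(0,\infty)$ outside an at most countable set.
   Context: Hopf–Lax semigroup: for $t>0$, $Q_tf(x):=\min_{y\in X}F(t,x,y)$ with $F(t,x,y):=f(y)+\frac{d^2(x,y)}{2t}$, and $Q_0f:=f$. For $t>0$, $D^+(x,t):=\max d(x,y)$ and $D^-(x,t):=\min d(x,y)$, where $y$ ranges over the minimizers of $F(t,x,\cdot)$. Slope: $|Dg|(x):=\limsup_{y\to x}\frac{|g(y)-g(x)|}{d(y,x)}$. A metric space is geodesic if any two points $x,y$ are joined by a curve $\gamma:[0,1]\to X$ with $\gamma_0=x$, $\gamma_1=y$ and $d(\gamma_s,\gamma_t)=|t-s|d(x,y)$ for all $s,t$. *)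

(* Defs.v *)
From Stdlib Require Import Reals Lra List Classical ClassicalEpsilon.
Open Scope R_scope.

Definition is_metric {X : Type} (d : X -> X -> R) : Prop :=
  (forall x y, 0 <= d x y) /\
  (forall x y, d x y = 0 <-> x = y) /\
  (forall x y, d x y = d y x) /\
  (forall x y z, d x z <= d x y + d y z).

Definition is_open {X : Type} (d : X -> X -> R) (U : X -> Prop) : Prop :=
  forall x, U x -> exists r, 0 < r /\ forall y, d x y < r -> U y.

Definition compact_space {X : Type} (d : X -> X -> R) : Prop :=
  forall (I : Type) (U : I -> X -> Prop),
    (forall i, is_open d (U i)) ->
    (forall x, exists i, U i x) ->
    exists l : list I, forall x, exists i, In i l /\ U i x.

Definition geodesic {X : Type} (d : X -> X -> R) : Prop :=
  forall x y, exists gamma : R -> X,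
    gamma 0 = x /\ gamma 1 = y /\
    forall s t, 0 <= s <= 1 -> 0 <= t <= 1 ->
      d (gamma s) (gamma t) = Rabs (t - s) * d x y.

Definition lipschitz {X : Type} (d : X -> X -> R) (f : X -> R) : Prop :=
  exists L, forall x y, Rabs (f x - f y) <= L * d x y.

Definition HLF {X : Type} (d : X -> X -> R) (f : X -> R) (t : R) (x y : X) : R :=
  f y + (d x y) ^ 2 / (2 * t).

Definition is_min_of {X : Type} (g : X -> R) (v : R) : Prop :=
  (exists y, v = g y) /\ forall y, v <= g y.

Definition is_max_of {X : Type} (P : X -> Prop) (g : X -> R) (v : R) : Prop :=
  (exists y, P y /\ v = g y) /\ forall y, P y -> g y <= v.

(* Hopf-Lax semigroup: Q_t f(x) = min_y F(t,x,y) for t > 0, Q_0 f = f.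
   (Values at t < 0 are irrelevant; we set them to f as well.) *)
Definition Q {X : Type} (d : X -> X -> R) (f : X -> R) (t : R) (x : X) : R :=
  if Rle_dec t 0 then f x
  else epsilon (inhabits 0) (is_min_of (HLF d f t x)).

Definition minimizer {X : Type} (d : X -> X -> R) (f : X -> R) (t : R) (x y : X) : Prop :=
  forall z, HLF d f t x y <= HLF d f t x z.

Definition Dplus {X : Type} (d : X -> X -> R) (f : X -> R) (x : X) (t : R) : R :=
  epsilon (inhabits 0) (is_max_of (minimizer d f t x) (d x)).

Definition Dminus {X : Type} (d : X -> X -> R) (f : X -> R) (x : X) (t : R) : R :=
  epsilon (inhabits 0) (fun v => (exists y, minimizer d f t x y /\ v = d x y) /\
                                 forall y, minimizer d f t x y -> v <= d x y).

Definition isolated {X : Type} (d : X -> X -> R) (x : X) : Prop :=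
  exists r, 0 < r /\ forall y, ~ (0 < d y x < r).

(* |Dg|(x) = limsup_{y -> x} |g y - g x| / d(y,x) = L (finite);
   by convention the slope at an isolated point is 0. *)
Definition is_slope {X : Type} (d : X -> X -> R) (g : X -> R) (x : X) (L : R) : Prop :=
  (isolated d x /\ L = 0) \/
  (~ isolated d x /\
   (forall eps, 0 < eps -> exists delta, 0 < delta /\
      forall y, 0 < d y x < delta -> Rabs (g y - g x) / d y x < L + eps) /\
   (forall eps delta, 0 < eps -> 0 < delta -> exists y,
      0 < d y x < delta /\ L - eps < Rabs (g y - g x) / d y x)).

Definition slope {X : Type} (d : X -> X -> R) (g : X -> R) (x : X) : R :=
  epsilon (inhabits 0) (is_slope d g x).

(* Main.v *)
Require Import Defs.
From Stdlib Require Import Reals.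
From Stdlib Require Import Lra Lia List Classical ClassicalEpsilon Cantor ZArith.
Open Scope R_scope.


Lemma list_pos_min {A : Type} (l : list A) (h : A -> R) :
  (forall a, In a l -> 0 < h a) -> exists m, 0 < m /\ forall a, In a l -> m <= h a.
Proof.
  induction l as [|a0 l IH]; intros H.
  - exists 1; split; [lra|]; intros a [].
  - destruct IH as [m [Hm Hl]]. { intros a Ha; apply H; right; exact Ha. }
    exists (Rmin m (h a0)); split.
    + apply Rmin_glb_lt; [lra| apply H; left; reflexivity].
    + intros a [<-|Ha]; [apply Rmin_r|].
      eapply Rle_trans; [apply Rmin_l| apply Hl; exact Ha].
Qed.

Lemma list_max {A : Type} (l : list A) (h : A -> R) :
  exists M, forall a, In a l -> h a <= M.
Proof.
  induction l as [|a0 l IH].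
  - exists 0; intros a [].
  - destruct IH as [M HM]. exists (Rmax M (h a0)).
    intros a [<-|Ha]; [apply Rmax_r|].
    eapply Rle_trans; [apply HM; exact Ha| apply Rmax_l].
Qed.

Definition closedP {X : Type} (d : X -> X -> R) (P : X -> Prop) : Prop :=
  forall y, ~ P y -> exists r, 0 < r /\ forall z, d y z < r -> ~ P z.

Definition lipK {X : Type} (d : X -> X -> R) (g : X -> R) (K : R) : Prop :=
  0 <= K /\ forall y z, Rabs (g y - g z) <= K * d y z.

Lemma diam_bound {X : Type} (d : X -> X -> R) (x0 : X) :
  is_metric d -> compact_space d -> exists B, 0 <= B /\ forall y z, d y z <= B.
Proof.
  intros [Hpos [Hz [Hsym Htri]]] Hc.
  destruct (Hc nat (fun n y => d x0 y < INR n)) as [l Hl].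
  - intros n y Hy. exists (INR n - d x0 y); split; [lra|].
    intros z Hz'. specialize (Htri x0 y z). lra.
  - intros y. destruct (INR_unbounded (d x0 y)) as [n Hn]. exists n; lra.
  - destruct (list_max l INR) as [M HM].
    exists (2 * Rabs M). split; [pose proof (Rabs_pos M); lra|].
    intros y z.
    destruct (Hl y) as [i [Hi Hy]]. destruct (Hl z) as [j [Hj Hz']].
    pose proof (HM i Hi). pose proof (HM j Hj).
    pose proof (Htri y x0 z). rewrite (Hsym y x0) in H1.
    pose proof (Rle_abs M). lra.
Qed.

Lemma compact_max {X : Type} (d : X -> X -> R) (P : X -> Prop) (g : X -> R) (K : R) :
  is_metric d -> compact_space d -> lipK d g K -> closedP d P -> (exists y, P y) ->
  exists y, P y /\ forall z, P z -> g z <= g y.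
Proof.
  intros Hm Hc [HK Hg] Hcl [y0 Hy0].
  apply NNPP; intro Hno.
  assert (Hbig : forall y, P y -> exists z, P z /\ g y < g z).
  { intros y Py. apply NNPP; intro Hn. apply Hno. exists y; split; [exact Py|].
    intros z Pz. apply Rnot_lt_le. intro Hlt. apply Hn. exists z; auto. }
  destruct (Hc (option X) (fun i y => match i with
                                      | Some z => P z /\ g y < g z
                                      | None => ~ P y end)) as [l Hl].
  - intros [z|] y Hy.
    + destruct Hy as [Pz Hlt].
      exists ((g z - g y) / (K + 1)). split.
      { apply Rdiv_lt_0_compat; lra. }
      intros w Hw. split; [exact Pz|].
      pose proof (Hg w y) as H1. rewrite (proj1 (proj2 (proj2 Hm)) w y) in H1.
      assert (K * d y w <= (g z - g y) * K / (K+1)).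
      { replace ((g z - g y) * K / (K+1)) with (K * ((g z - g y) / (K+1))) by (field; lra).
        apply Rmult_le_compat_l; lra. }
      assert ((g z - g y) * K / (K+1) < g z - g y).
      { apply Rmult_lt_reg_r with (K+1); [lra|].
        unfold Rdiv. rewrite Rmult_assoc, Rinv_l by lra. nra. }
      pose proof (Rle_abs (g w - g y)). lra.
    + destruct (Hcl y Hy) as [r [Hr Hr']]. exists r; split; [exact Hr|].
      intros z Hz; apply Hr'; exact Hz.
  - intros y. destruct (classic (P y)) as [Py|Py].
    + destruct (Hbig y Py) as [z [Pz Hz]]. exists (Some z); auto.
    + exists None; exact Py.
  - assert (Hex : exists z, In (Some z) l /\ P z).
    { destruct (Hl y0) as [[z|] [Hi Hu]]; [exists z; tauto| contradiction]. }
    assert (Hlm : forall l' : list (option X), (exists z, In (Some z) l' /\ P z) ->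
              exists z0, In (Some z0) l' /\ P z0 /\ forall z, In (Some z) l' -> P z -> g z <= g z0).
    { induction l' as [|a l' IH]; intros [z [Hz Pz]]; [destruct Hz|].
      destruct (classic (exists z, In (Some z) l' /\ P z)) as [He|He].
      - destruct (IH He) as [z0 [Hz0 [Pz0 Hmax]]].
        destruct a as [a|].
        + destruct (classic (P a)) as [Pa|Pa].
          * destruct (Rle_lt_dec (g a) (g z0)).
            -- exists z0; split; [right; exact Hz0|]; split; [exact Pz0|].
               intros w [Hw|Hw] Pw; [inversion Hw; subst; exact r| apply Hmax; auto].
            -- exists a; split; [left; reflexivity|]; split; [exact Pa|].
               intros w [Hw|Hw] Pw; [inversion Hw; subst; lra|].
               pose proof (Hmax w Hw Pw); lra.
          * exists z0; split; [right; exact Hz0|]; split; [exact Pz0|].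
            intros w [Hw|Hw] Pw; [inversion Hw; subst; contradiction| apply Hmax; auto].
        + exists z0; split; [right; exact Hz0|]; split; [exact Pz0|].
          intros w [Hw|Hw] Pw; [discriminate| apply Hmax; auto].
      - destruct Hz as [Hz|Hz]; [|exfalso; apply He; exists z; auto].
        subst a. exists z; split; [left; reflexivity|]; split; [exact Pz|].
        intros w [Hw|Hw] Pw; [inversion Hw; subst; lra|].
        exfalso; apply He; exists w; auto. }
    destruct (Hlm l Hex) as [z0 [Hz0 [Pz0 Hmax]]].
    destruct (Hl z0) as [[z|] [Hi Hu]]; [|contradiction].
    destruct Hu as [Pz Hlt]. pose proof (Hmax z Hi Pz). lra.
Qed.

Lemma cluster {X : Type} (d : X -> X -> R) (P : R -> X -> Prop) :
  is_metric d -> compact_space d ->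
  (forall a b z, 0 < a <= b -> P a z -> P b z) ->
  (forall δ, 0 < δ -> exists z, P δ z) ->
  exists zs, forall r δ, 0 < r -> 0 < δ -> exists z, P δ z /\ d zs z < r.
Proof.
  intros Hm Hc Hmono Hne.
  apply NNPP; intro Hno.
  assert (Hfar : forall zs, exists r δ, 0 < r /\ 0 < δ /\ forall z, P δ z -> r <= d zs z).
  { intros zs. apply NNPP; intro Hn. apply Hno. exists zs. intros r δ Hr Hδ.
    apply NNPP; intro Hn2. apply Hn. exists r, δ. split; [exact Hr|]; split; [exact Hδ|].
    intros z Pz. apply Rnot_lt_le; intro Hlt. apply Hn2; exists z; auto. }
  destruct (Hc (X * R * R)%type (fun i y => let '(zs, r, δ) := i in
       0 < r /\ 0 < δ /\ (forall z, P δ z -> r <= d zs z) /\ d zs y < r)) as [l Hl].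
  - intros [[zs r] δ] y [Hr [Hδ [Hf Hy]]].
    exists (r - d zs y); split; [lra|]. intros z Hz.
    destruct Hm as [_ [_ [_ Htri]]]. pose proof (Htri zs y z).
    repeat split; auto; lra.
  - intros y. destruct (Hfar y) as [r [δ [Hr [Hδ Hf]]]].
    exists (y, r, δ). repeat split; auto.
    destruct Hm as [_ [Hz _]]. rewrite (proj2 (Hz y y) eq_refl). exact Hr.
  - destruct (list_pos_min l (fun i => if Rlt_dec 0 (snd i) then snd i else 1)) as [m [Hm0 Hmin]].
    { intros [[zs r] δ] Hi. simpl. destruct (Rlt_dec 0 δ); lra. }
    destruct (Hne m Hm0) as [z Pz].
    destruct (Hl z) as [[[zs r] δ] [Hi [Hr [Hδ [Hf Hz]]]]].
    pose proof (Hmin _ Hi) as Hmi. simpl in Hmi. destruct (Rlt_dec 0 δ); [|lra].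
    pose proof (Hf z (Hmono m δ z (conj Hm0 Hmi) Pz)). lra.
Qed.

Definition setting {X : Type} (d : X -> X -> R) (f : X -> R) (Lf B : R) : Prop :=
  is_metric d /\ compact_space d /\ 0 <= Lf /\ (forall y z, Rabs (f y - f z) <= Lf * d y z)
  /\ 0 <= B /\ (forall y z, d y z <= B).

Lemma abs_le_i a b : -a <= b <= a -> Rabs b <= a.
Proof. intros; apply Rabs_le; lra. Qed.

Lemma Rabs_def2b a b : Rabs b <= a -> -a <= b <= a.
Proof. intros H. pose proof (Rle_abs b). pose proof (Rle_abs (-b)). rewrite Rabs_Ropp in H1. lra. Qed.

Lemma HLF_lip2 {X : Type} (d : X -> X -> R) f Lf B t a a' b b' :
  setting d f Lf B -> 0 < t ->
  Rabs (HLF d f t a b - HLF d f t a' b') <= (Lf + B/t) * (d a a' + d b b').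
Proof.
  intros [[Hpos [Hz [Hsym Htri]]] [_ [HL [Hf [HB Hd]]]]] Ht.
  unfold HLF.
  pose proof (Hf b b') as H1. apply Rabs_def2b in H1.
  pose proof (Htri a a' b) as T1. pose proof (Htri a' b' b) as T2.
  pose proof (Htri a' a b') as T3. pose proof (Htri a b b') as T4.
  rewrite (Hsym b' b) in T2. rewrite (Hsym a' a) in T3.
  pose proof (Hpos a b). pose proof (Hpos a' b'). pose proof (Hd a b). pose proof (Hd a' b').
  pose proof (Hpos a a'). pose proof (Hpos b b').
  set (u := d a b) in *. set (v := d a' b') in *. set (e := d a a' + d b b').
  assert (He1 : u - v <= e) by (unfold e; lra).
  assert (He2 : v - u <= e) by (unfold e; lra).
  assert (Hq1 : (u - v) * (u + v) <= e * (2 * B)) by nra.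
  assert (Hq2 : (v - u) * (u + v) <= e * (2 * B)) by nra.
  set (w := / (2 * t)).
  assert (Hw : 0 < w) by (unfold w; apply Rinv_0_lt_compat; lra).
  replace (u ^ 2 / (2 * t)) with (u^2 * w) by (unfold w, Rdiv; ring).
  replace (v ^ 2 / (2 * t)) with (v^2 * w) by (unfold w, Rdiv; ring).
  replace ((Lf + B / t) * e) with (Lf * e + e * (2 * B) * w) by (unfold w; field; lra).
  apply abs_le_i. unfold e in *.
  assert (0 <= Lf * d a a') by nra.
  split; nra.
Qed.

Lemma HLF_lipK {X : Type} (d : X -> X -> R) f Lf B t x :
  setting d f Lf B -> 0 < t -> lipK d (HLF d f t x) (Lf + B/t).
Proof.
  intros Hs Ht. split.
  - destruct Hs as [_ [_ [HL [_ [HB _]]]]]. assert (0 <= B/t) by (unfold Rdiv; apply Rmult_le_pos; [lra| left; apply Rinv_0_lt_compat; lra]). lra.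
  - intros y z. pose proof (HLF_lip2 d f Lf B t x x y z Hs Ht).
    destruct Hs as [[_ [Hz _]] _]. rewrite (proj2 (Hz x x) eq_refl) in H. lra.
Qed.

Lemma min_exists {X : Type} (d : X -> X -> R) f Lf B t x :
  setting d f Lf B -> 0 < t -> exists y, minimizer d f t x y.
Proof.
  intros Hs Ht.
  destruct (compact_max d (fun _ => True) (fun y => - HLF d f t x y) (Lf + B/t))
    as [y [_ Hy]].
  - apply Hs.
  - apply Hs.
  - destruct (HLF_lipK d f Lf B t x Hs Ht) as [HK Hg]. split; [exact HK|].
    intros a b. replace (- HLF d f t x a - - HLF d f t x b) with (- (HLF d f t x a - HLF d f t x b)) by ring.
    rewrite Rabs_Ropp. apply Hg.
  - intros y Hy. exfalso; apply Hy; exact I.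
  - exists x; exact I.
  - exists y. intros z. pose proof (Hy z I). lra.
Qed.

Lemma Q_eq {X : Type} (d : X -> X -> R) f Lf B t x y :
  setting d f Lf B -> 0 < t -> minimizer d f t x y -> Q d f t x = HLF d f t x y.
Proof.
  intros Hs Ht Hy. unfold Q. destruct (Rle_dec t 0); [lra|].
  pose proof (epsilon_spec (inhabits 0) (is_min_of (HLF d f t x))) as Hsp.
  destruct Hsp as [[y0 Hy0] Hle].
  - exists (HLF d f t x y). split; [exists y; reflexivity| exact Hy].
  - pose proof (Hle y). pose proof (Hy y0). lra.
Qed.

Lemma Q_le {X : Type} (d : X -> X -> R) f Lf B t x z :
  setting d f Lf B -> 0 < t -> Q d f t x <= HLF d f t x z.
Proof.
  intros Hs Ht. destruct (min_exists d f Lf B t x Hs Ht) as [y Hy].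
  rewrite (Q_eq d f Lf B t x y Hs Ht Hy). apply Hy.
Qed.

Lemma min_closed {X : Type} (d : X -> X -> R) f Lf B t x :
  setting d f Lf B -> 0 < t -> closedP d (minimizer d f t x).
Proof.
  intros Hs Ht y Hy.
  assert (Hw : exists w, HLF d f t x w < HLF d f t x y).
  { apply NNPP; intro Hn; apply Hy; intro w. apply Rnot_lt_le; intro; apply Hn; exists w; auto. }
  destruct Hw as [w Hw].
  destruct (HLF_lipK d f Lf B t x Hs Ht) as [HK Hg].
  set (K := Lf + B/t) in *. clearbody K.
  exists ((HLF d f t x y - HLF d f t x w) / (K + 1)). split.
  { apply Rdiv_lt_0_compat; lra. }
  intros z Hz Hmz. specialize (Hmz w).
  pose proof (Hg y z) as H1. apply Rabs_def2b in H1.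
  assert (K * d y z <= (HLF d f t x y - HLF d f t x w) * K / (K + 1)).
  { replace ((HLF d f t x y - HLF d f t x w) * K / (K + 1))
      with (K * ((HLF d f t x y - HLF d f t x w) / (K + 1))) by (field; lra).
    apply Rmult_le_compat_l; lra. }
  assert ((HLF d f t x y - HLF d f t x w) * K / (K + 1) < HLF d f t x y - HLF d f t x w).
  { replace ((HLF d f t x y - HLF d f t x w) * K / (K + 1)) with
     ((HLF d f t x y - HLF d f t x w) - (HLF d f t x y - HLF d f t x w) / (K + 1)) by (field; lra).
    assert (0 < (HLF d f t x y - HLF d f t x w) / (K + 1)) by (apply Rdiv_lt_0_compat; lra). lra. }
  lra.
Qed.

Lemma Dplus_spec {X : Type} (d : X -> X -> R) f Lf B t x :
  setting d f Lf B -> 0 < t ->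
  (exists y, minimizer d f t x y /\ Dplus d f x t = d x y) /\
  (forall y, minimizer d f t x y -> d x y <= Dplus d f x t).
Proof.
  intros Hs Ht. unfold Dplus.
  apply (epsilon_spec (inhabits 0) (is_max_of (minimizer d f t x) (d x))).
  destruct (compact_max d (minimizer d f t x) (d x) 1) as [y [Hy Hmax]].
  - apply Hs. - apply Hs.
  - split; [lra|]. intros a b. destruct Hs as [[Hpos [_ [Hsym Htri]]] _].
    apply abs_le_i. pose proof (Htri x a b). pose proof (Htri x b a). rewrite (Hsym b a) in H0. lra.
  - eapply min_closed; eauto.
  - eapply min_exists; eauto.
  - exists (d x y). split; [exists y; auto| exact Hmax].
Qed.

Lemma Dminus_spec {X : Type} (d : X -> X -> R) f Lf B t x :
  setting d f Lf B -> 0 < t ->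
  (exists y, minimizer d f t x y /\ Defs.Dminus d f x t = d x y) /\
  (forall y, minimizer d f t x y -> Defs.Dminus d f x t <= d x y).
Proof.
  intros Hs Ht. unfold Defs.Dminus.
  apply (epsilon_spec (inhabits 0) (fun v => (exists y, minimizer d f t x y /\ v = d x y) /\
                                 forall y, minimizer d f t x y -> v <= d x y)).
  destruct (compact_max d (minimizer d f t x) (fun y => - d x y) 1) as [y [Hy Hmax]].
  - apply Hs. - apply Hs.
  - split; [lra|]. intros a b. destruct Hs as [[Hpos [_ [Hsym Htri]]] _].
    apply abs_le_i. pose proof (Htri x a b). pose proof (Htri x b a). rewrite (Hsym b a) in H0. lra.
  - eapply min_closed; eauto.
  - eapply min_exists; eauto.
  - exists (d x y). split; [exists y; auto|]. intros z Hz. pose proof (Hmax z Hz). lra.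
Qed.

Lemma Dminus_le_Dplus {X : Type} (d : X -> X -> R) f Lf B t x :
  setting d f Lf B -> 0 < t -> Defs.Dminus d f x t <= Dplus d f x t.
Proof.
  intros Hs Ht. destruct (Dminus_spec d f Lf B t x Hs Ht) as [[y [Hy ->]] _].
  apply (proj2 (Dplus_spec d f Lf B t x Hs Ht)); exact Hy.
Qed.

Lemma usc_Dplus {X : Type} (d : X -> X -> R) f Lf B t x :
  setting d f Lf B -> 0 < t -> forall eps, 0 < eps -> exists δ, 0 < δ /\
   forall y y', d y x < δ -> minimizer d f t y y' -> d y y' < Dplus d f x t + eps.
Proof.
  intros Hs Ht eps He.
  apply NNPP; intro Hno.
  assert (Hbad : forall δ, 0 < δ -> exists z, exists y, d y x < δ /\ minimizer d f t y z /\
                 Dplus d f x t + eps <= d y z).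
  { intros δ Hδ. apply NNPP; intro Hn. apply Hno. exists δ; split; [exact Hδ|].
    intros y y' Hy Hy'. apply Rnot_le_lt; intro Hle. apply Hn. exists y', y; auto. }
  destruct (cluster d (fun δ z => exists y, d y x < δ /\ minimizer d f t y z /\
                 Dplus d f x t + eps <= d y z)) as [zs Hzs].
  - apply Hs. - apply Hs.
  - intros a b z Hab [y [H1 H2]]. exists y; split; [lra| exact H2].
  - exact Hbad.
  - pose proof Hs as [[Hpos [Hz [Hsym Htri]]] [_ [HL [Hf [HB Hd]]]]].
    set (D := Dplus d f x t) in *.
    assert (Hfar : D + eps <= d x zs).
    { apply Rnot_lt_le; intro Hlt.
      destruct (Hzs ((D + eps - d x zs)/2) ((D + eps - d x zs)/2)) as [z [[y [Hy [_ Hyz]]] Hz']]; try lra.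
      pose proof (Htri y x zs). pose proof (Htri y zs z). lra. }
    assert (Hmin : minimizer d f t x zs).
    { intro w. apply Rnot_lt_le; intro Hlt.
      set (gap := HLF d f t x zs - HLF d f t x w).
      set (K := Lf + B/t).
      assert (HK : 0 <= K).
      { unfold K. assert (0 <= B/t) by (unfold Rdiv; apply Rmult_le_pos; [lra| left; apply Rinv_0_lt_compat; lra]). lra. }
      destruct (Hzs (gap / (3*K+3)) (gap / (3*K+3))) as [z [[y [Hy [Hmy _]]] Hz']];
        try (apply Rdiv_lt_0_compat; unfold gap; lra).
      pose proof (HLF_lip2 d f Lf B t x y zs z Hs Ht) as E1.
      pose proof (HLF_lip2 d f Lf B t y x w w Hs Ht) as E2.
      fold K in E1, E2.
      rewrite (proj2 (Hz w w) eq_refl) in E2.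
      rewrite (Hsym x y) in E1.
      apply Rabs_def2b in E1. apply Rabs_def2b in E2.
      pose proof (Hmy w).
      set (η := gap / (3*K+3)) in *.
      assert (Hη : η * (3*K+3) = gap) by (unfold η; field; lra).
      assert (K * (d y x + d zs z) <= K * (2*η)) by (apply Rmult_le_compat_l; lra).
      assert (K * (d y x + 0) <= K * η) by (apply Rmult_le_compat_l; lra).
      assert (0 < gap) by (unfold gap; lra).
      assert (0 < η) by (unfold η; apply Rdiv_lt_0_compat; lra).
      assert (Hg : gap = HLF d f t x zs - HLF d f t x w) by reflexivity.
      clearbody gap η K. nra. }
    pose proof (proj2 (Dplus_spec d f Lf B t x Hs Ht) zs Hmin). fold D in H. lra.
Qed.

Lemma geo_point {X : Type} (d : X -> X -> R) x z s :
  is_metric d -> geodesic d -> 0 <= s <= 1 ->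
  exists y, d x y = s * d x z /\ d y z = (1 - s) * d x z.
Proof.
  intros Hm Hg Hs. destruct (Hg x z) as [g [H0 [H1 H]]].
  exists (g s). split.
  - rewrite <- H0 at 1. rewrite H by lra. rewrite Rabs_right by lra. ring.
  - rewrite <- H1 at 1. rewrite H by lra. rewrite Rabs_right by lra. ring.
Qed.

Lemma not_iso {X : Type} (d : X -> X -> R) x z :
  is_metric d -> geodesic d -> 0 < d x z -> forall δ, 0 < δ -> exists y, 0 < d y x < δ.
Proof.
  intros Hm Hg Hz δ Hδ.
  set (s := Rmin (1/2) (δ / (2 * d x z))).
  assert (Hs1 : 0 < s).
  { unfold s. apply Rmin_glb_lt; [lra|]. apply Rdiv_lt_0_compat; lra. }
  assert (Hs2 : s <= 1/2) by apply Rmin_l.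
  assert (Hs3 : s <= δ / (2 * d x z)) by apply Rmin_r.
  destruct (geo_point d x z s Hm Hg) as [y [Hy _]]; [lra|].
  exists y. destruct Hm as [_ [_ [Hsym _]]]. rewrite Hsym, Hy. split.
  - apply Rmult_lt_0_compat; lra.
  - assert (s * d x z <= δ / (2 * d x z) * d x z) by (apply Rmult_le_compat_r; lra).
    replace (δ / (2 * d x z) * d x z) with (δ/2) in H by (field; lra). lra.
Qed.

Lemma div_lt A C r : 0 < r -> A < C * r -> A / r < C.
Proof.
  intros Hr H. apply Rmult_lt_reg_r with r; [exact Hr|].
  unfold Rdiv. rewrite Rmult_assoc, Rinv_l by lra. lra.
Qed.

Lemma lt_div A C r : 0 < r -> C * r < A -> C < A / r.
Proof.
  intros Hr H. apply Rmult_lt_reg_r with r; [exact Hr|].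
  unfold Rdiv. rewrite Rmult_assoc, Rinv_l by lra. lra.
Qed.

Lemma ub_alg t ρ D a c eps P :
  0 < t -> 0 < ρ -> ρ < eps * t -> 0 <= D -> 0 <= a -> a < D + eps * t / 2 ->
  0 <= c <= ρ + a -> P <= (c^2 - a^2) / (2*t) -> P < (D/t + eps) * ρ.
Proof.
  intros Ht Hr Hre HD Ha Hac Hc HP.
  assert (c^2 - a^2 <= ρ * (ρ + 2 * a)) by nra.
  assert (ρ * (ρ + 2*a) < ρ * (2*D + 2*eps*t)) by nra.
  assert ((c^2 - a^2)/(2*t) < ρ * (2*D + 2*eps*t) / (2*t)).
  { unfold Rdiv. apply Rmult_lt_compat_r; [apply Rinv_0_lt_compat; lra| lra]. }
  replace ((D/t + eps) * ρ) with (ρ * (2*D + 2*eps*t) / (2*t)) by (field; lra). lra.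
Qed.

Lemma lb_alg t D s eps P :
  0 < t -> 0 < D -> 0 < s <= 1/2 -> s <= t * eps / D ->
  D^2 * s * (2 - s) / (2*t) <= P -> (D/t - eps) * (s * D) < P.
Proof.
  intros Ht HD Hs Hse HP.
  assert (s * D <= t * eps) by (apply Rmult_le_compat_r with (r:=D) in Hse; [|lra];
    replace (t * eps / D * D) with (t*eps) in Hse by (field; lra); lra).
  assert ((D/t - eps) * (s * D) = D^2 * s * (2 - s) / (2*t) - s * D * (2 * t * eps - s * D) / (2*t))
    by (field; lra).
  assert (0 < s * D * (2 * t * eps - s * D) / (2*t)).
  { apply Rdiv_lt_0_compat; [|lra]. apply Rmult_lt_0_compat; [nra|].
    assert (0 < eps) by (destruct (Rle_lt_dec eps 0); [|lra];
      assert (t * eps / D <= 0) by (unfold Rdiv; assert (t*eps <= 0) by nra;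
        assert (0 < / D) by (apply Rinv_0_lt_compat; lra); nra); lra).
    nra. }
  lra.
Qed.

Lemma slope_Q {X : Type} (d : X -> X -> R) f Lf B t x :
  setting d f Lf B -> geodesic d -> 0 < t ->
  is_slope d (Q d f t) x (Dplus d f x t / t).
Proof.
  intros Hs Hg Ht.
  pose proof Hs as [Hm [_ [HL [Hf [HB Hd]]]]].
  pose proof Hm as [Hpos [Hz [Hsym Htri]]].
  destruct (Dplus_spec d f Lf B t x Hs Ht) as [[x' [Hx' HD]] HDmax].
  set (D := Dplus d f x t) in *.
  assert (HD0 : 0 <= D) by (rewrite HD; apply Hpos).
  destruct (classic (exists z, 0 < d x z)) as [[z Hzx]|Hno].
  - right. split.
    { intros [r [Hr Hiso]]. destruct (not_iso d x z Hm Hg Hzx r Hr) as [y Hy].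
      apply (Hiso y); exact Hy. }
    split.
    + intros eps He.
      destruct (usc_Dplus d f Lf B t x Hs Ht (eps * t / 2)) as [δ1 [Hδ1 Husc]].
      { assert (0 < eps * t) by nra. lra. }
      exists (Rmin δ1 (eps * t)). split.
      { apply Rmin_glb_lt; [lra| nra]. }
      intros y [Hy0 Hy1].
      assert (Hy2 : d y x < δ1) by (eapply Rlt_le_trans; [exact Hy1| apply Rmin_l]).
      assert (Hy3 : d y x < eps * t) by (eapply Rlt_le_trans; [exact Hy1| apply Rmin_r]).
      destruct (min_exists d f Lf B t y Hs Ht) as [y' Hy'].
      pose proof (Husc y y' Hy2 Hy') as Ha. fold D in Ha.
      apply div_lt; [exact Hy0|].
      pose proof (Q_eq d f Lf B t x x' Hs Ht Hx') as E1.
      pose proof (Q_eq d f Lf B t y y' Hs Ht Hy') as E2.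
      pose proof (Q_le d f Lf B t y x' Hs Ht) as E3.
      pose proof (Q_le d f Lf B t x y' Hs Ht) as E4.
      unfold HLF in *.
      apply Rabs_def1.
      * apply (ub_alg t (d y x) D D (d y x') eps); try lra.
        { split; [apply Hpos|]. rewrite HD. apply Htri. }
        rewrite HD. unfold Rdiv in *. lra.
      * assert (- (Q d f t y - Q d f t x) < (D / t + eps) * d y x); [|lra].
        apply (ub_alg t (d y x) D (d y y') (d x y') eps); try lra.
        all: try apply Hpos.
        all: try (split; [apply Hpos|]; rewrite (Hsym y x); apply Htri).
        all: unfold Rdiv in *; lra.
    + intros eps δ He Hδ.
      destruct (Req_dec D 0) as [HD0'|HDp].
      * destruct (not_iso d x z Hm Hg Hzx δ Hδ) as [y Hy]. exists y. split; [exact Hy|].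
        rewrite HD0'. unfold Rdiv at 1. rewrite Rmult_0_l.
        assert (0 <= Rabs (Q d f t y - Q d f t x) / d y x).
        { unfold Rdiv. apply Rmult_le_pos; [apply Rabs_pos| left; apply Rinv_0_lt_compat; lra]. }
        lra.
      * assert (HDp' : 0 < D) by lra.
        set (s := Rmin (1/2) (Rmin (δ / (2 * D)) (t * eps / D))).
        assert (Hs1 : 0 < s).
        { unfold s. apply Rmin_glb_lt; [lra|]. apply Rmin_glb_lt; apply Rdiv_lt_0_compat; nra. }
        assert (Hs2 : s <= 1/2) by apply Rmin_l.
        assert (Hs3 : s <= δ / (2 * D)) by (eapply Rle_trans; [apply Rmin_r| apply Rmin_l]).
        assert (Hs4 : s <= t * eps / D) by (eapply Rle_trans; [apply Rmin_r| apply Rmin_r]).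
        destruct (geo_point d x x' s Hm Hg) as [y [Hy1 Hy2]]; [lra|].
        rewrite <- HD in Hy1, Hy2.
        exists y. rewrite (Hsym y x), Hy1.
        split.
        { split; [nra|].
          assert (s * D <= δ / (2 * D) * D) by (apply Rmult_le_compat_r; lra).
          replace (δ / (2 * D) * D) with (δ/2) in H by (field; lra). lra. }
        apply lt_div; [nra|].
        pose proof (Q_eq d f Lf B t x x' Hs Ht Hx') as E1.
        pose proof (Q_le d f Lf B t y x' Hs Ht) as E3.
        unfold HLF in *. rewrite Hy2 in E3. rewrite <- HD in E1.
        assert (Hlow : D^2 * s * (2 - s) / (2*t) <= Q d f t x - Q d f t y).
        { rewrite E1. replace (D^2 * s * (2 - s) / (2*t)) with (D^2/(2*t) - ((1-s)*D)^2/(2*t))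
            by (field; lra). lra. }
        pose proof (lb_alg t D s eps _ Ht HDp' (conj Hs1 Hs2) Hs4 Hlow).
        pose proof (Rle_abs (- (Q d f t y - Q d f t x))). rewrite Rabs_Ropp in H0.
        lra.
  - left. split.
    + exists 1. split; [lra|]. intros y [Hy _]. apply Hno. exists y. rewrite Hsym. exact Hy.
    + assert (D = 0).
      { rewrite HD. destruct (Hpos x x') as [H|H]; [exfalso; apply Hno; exists x'; auto| auto]. }
      rewrite H. unfold Rdiv. ring.
Qed.

Lemma slope_unique {X : Type} (d : X -> X -> R) g x L1 L2 :
  is_slope d g x L1 -> is_slope d g x L2 -> L1 = L2.
Proof.
  assert (Hgen : forall L1 L2, is_slope d g x L1 -> is_slope d g x L2 -> ~ L1 < L2).
  { intros A C [[Hi HA]|[Hi [Hu Hl]]] [[Hi' HC]|[Hi' [Hu' Hl']]] Hlt.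
    - lra.
    - contradiction.
    - contradiction.
    - destruct (Hu ((C - A)/2)) as [δ [Hδ Hδ']]; [lra|].
      destruct (Hl' ((C - A)/2) δ) as [y [Hy Hy']]; [lra|lra|].
      pose proof (Hδ' y Hy). lra. }
  intros H1 H2. destruct (Rtotal_order L1 L2) as [H|[H|H]]; auto.
  - exfalso; exact (Hgen _ _ H1 H2 H).
  - exfalso; exact (Hgen _ _ H2 H1 H).
Qed.

Lemma IZR_split z : IZR z = INR (Z.to_nat z) - INR (Z.to_nat (- z)).
Proof.
  destruct z as [|p|p]; simpl.
  - ring.
  - rewrite INR_IPR. unfold IZR. ring.
  - rewrite INR_IPR. rewrite IZR_NEG. unfold IZR. ring.
Qed.

Definition rq (a b m : nat) : R := (INR a - INR b) / INR (S m).

Definition jump (g : R -> R) (r t : R) : Prop :=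
  (forall u, 0 < u < t -> g u < r) /\ (forall s, t < s -> r < g s).

Lemma dense_rq α β : α < β -> exists a b m, α < rq a b m < β.
Proof.
  intros Hab.
  destruct (INR_unbounded (1 / (β - α))) as [m Hm].
  set (N := INR (S m)).
  assert (HN : INR m < N) by (unfold N; rewrite S_INR; lra).
  assert (Hpos : 0 < 1 / (β - α)) by (apply Rdiv_lt_0_compat; lra).
  assert (HN0 : 0 < N) by lra.
  assert (HNb : 1 / N < β - α).
  { apply Rmult_lt_reg_r with (N * / (β - α)).
    - apply Rmult_lt_0_compat; [lra| apply Rinv_0_lt_compat; lra].
    - replace (1 / N * (N * / (β - α))) with (1 / (β - α)) by (field; lra).
      replace ((β - α) * (N * / (β - α))) with N by (field; lra). lra. }
  destruct (archimed (α * N)) as [H1 H2].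
  set (k := up (α * N)) in *.
  exists (Z.to_nat k), (Z.to_nat (- k)), m. unfold rq. fold N.
  rewrite <- IZR_split. split.
  - apply Rmult_lt_reg_r with N; [lra|]. replace (IZR k / N * N) with (IZR k) by (field; lra). lra.
  - apply Rmult_lt_reg_r with N; [lra|]. replace (IZR k / N * N) with (IZR k) by (field; lra).
    assert (1 < (β - α) * N).
    { apply Rmult_lt_compat_r with (r := N) in HNb; [|lra].
      replace (1 / N * N) with 1 in HNb by (field; lra). lra. }
    lra.
Qed.

Lemma jump_unique g r t1 t2 :
  (forall u s, 0 < u < s -> g u <= g s) -> 0 < t1 -> 0 < t2 -> jump g r t1 -> jump g r t2 -> t1 = t2.
Proof.
  intros Hmono H1 H2 [A1 B1] [A2 B2].
  destruct (Rtotal_order t1 t2) as [H|[H|H]]; auto; exfalso.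
  - pose proof (B1 ((t1+t2)/2)). pose proof (A2 ((t1+t2)/2)). lra.
  - pose proof (B2 ((t1+t2)/2)). pose proof (A1 ((t1+t2)/2)). lra.
Qed.

Lemma cont_nojump g t :
  (forall u s, 0 < u < s -> g u <= g s) -> 0 < t ->
  (forall a b m, ~ jump g (rq a b m) t) ->
  forall eps, 0 < eps ->
  (exists u, 0 < u < t /\ g t - eps < g u) /\ (exists s, t < s /\ g s < g t + eps).
Proof.
  intros Hmono Ht Hnj eps He. split.
  - apply NNPP; intro Hn.
    destruct (dense_rq (g t - eps) (g t)) as [a [b [m Hr]]]; [lra|].
    apply (Hnj a b m). split.
    + intros u Hu. apply Rnot_le_lt. intro Hle. apply Hn. exists u. split; [exact Hu|].
      apply Rnot_le_lt; intro. lra.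
    + intros s Hs. pose proof (Hmono t s (conj Ht Hs)). lra.
  - apply NNPP; intro Hn.
    destruct (dense_rq (g t) (g t + eps)) as [a [b [m Hr]]]; [lra|].
    apply (Hnj a b m). split.
    + intros u Hu. pose proof (Hmono u t Hu). lra.
    + intros s Hs. apply Rnot_le_lt. intro Hle. apply Hn. exists s. split; [exact Hs|].
      apply Rnot_le_lt; intro. lra.
Qed.

Definition Nseq (g : R -> R) (n : nat) : R :=
  let p := Cantor.of_nat n in let q := Cantor.of_nat (fst p) in
  epsilon (inhabits 0) (fun t => 0 < t /\ jump g (rq (fst q) (snd q) (snd p)) t).

Lemma Nseq_spec g t :
  (forall u s, 0 < u < s -> g u <= g s) -> 0 < t -> (forall n, Nseq g n <> t) ->
  forall a b m, ~ jump g (rq a b m) t.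
Proof.
  intros Hmono Ht Hn a b m Hj.
  apply (Hn (Cantor.to_nat (Cantor.to_nat (a, b), m))).
  unfold Nseq. cbv zeta. rewrite Cantor.cancel_of_to. cbn [fst snd]. rewrite Cantor.cancel_of_to. cbn [fst snd].
  set (P := fun t0 => 0 < t0 /\ jump g (rq a b m) t0).
  assert (HP : P (epsilon (inhabits 0) P)) by (apply epsilon_spec; exists t; split; auto).
  destruct HP as [H1 H2].
  eapply jump_unique; eauto.
Qed.

Lemma mono_pm {X : Type} (d : X -> X -> R) f Lf B x t s :
  setting d f Lf B -> 0 < t < s -> Dplus d f x t <= Defs.Dminus d f x s.
Proof.
  intros Hs [Ht Hts].
  assert (Hs0 : 0 < s) by lra.
  destruct (Dplus_spec d f Lf B t x Hs Ht) as [[y [Hy ->]] _].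
  destruct (Dminus_spec d f Lf B s x Hs Hs0) as [[z [Hz ->]] _].
  pose proof (Hy z) as H1. pose proof (Hz y) as H2. unfold HLF in *.
  destruct Hs as [[Hpos _] _]. pose proof (Hpos x y). pose proof (Hpos x z).
  set (a := d x y) in *. set (b := d x z) in *.
  assert (Hk : 0 < 1/(2*t) - 1/(2*s)).
  { assert (1/(2*s) < 1/(2*t)); [|lra].
    unfold Rdiv. rewrite !Rmult_1_l. apply Rinv_lt_contravar; nra. }
  assert (Hsum : (a^2 - b^2) * (1/(2*t) - 1/(2*s)) <= 0).
  { replace ((a^2 - b^2) * (1/(2*t) - 1/(2*s))) with
      ((a^2/(2*t) - b^2/(2*t)) - (a^2/(2*s) - b^2/(2*s))) by (field; lra). lra. }
  assert (a^2 <= b^2) by nra.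
  nra.
Qed.

Lemma mono_Dplus {X : Type} (d : X -> X -> R) f Lf B x :
  setting d f Lf B -> forall u s, 0 < u < s -> Dplus d f x u <= Dplus d f x s.
Proof.
  intros Hs u s Hus. pose proof (mono_pm d f Lf B x u s Hs Hus).
  pose proof (Dminus_le_Dplus d f Lf B s x Hs ltac:(lra)). lra.
Qed.

Lemma q_upper {X : Type} (d : X -> X -> R) f Lf B x t s y :
  setting d f Lf B -> 0 < t -> 0 < s -> minimizer d f t x y ->
  Q d f s x - Q d f t x <= d x y ^ 2 * (1/(2*s) - 1/(2*t)).
Proof.
  intros Hs Ht Hs0 Hy.
  rewrite (Q_eq d f Lf B t x y Hs Ht Hy).
  pose proof (Q_le d f Lf B s x y Hs Hs0). unfold HLF in *.
  replace (d x y ^ 2 * (1/(2*s) - 1/(2*t))) with (d x y ^ 2 / (2*s) - d x y ^ 2 / (2*t)) by (field; lra).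
  lra.
Qed.

Lemma right_alg t h D a e eps Δ :
  0 < t -> 0 < h -> 0 <= D -> D <= a -> a < D + e -> e <= 1 -> e * (2*D+1) <= eps * t^2 / 2 ->
  h * (D^2 + 1) < eps * t^3 / 2 ->
  Δ <= D^2 * (1/(2*(t+h)) - 1/(2*t)) -> a^2 * (1/(2*(t+h)) - 1/(2*t)) <= Δ ->
  Rabs (Δ / h - - (1/2) * (D/t)^2) < eps.
Proof.
  intros Ht Hh HD HDa Hae He1 He Hhe H1 H2.
  set (p := / (2*t*(t+h))). set (c := / (2*t^2)).
  assert (Hp : 0 < p) by (unfold p; apply Rinv_0_lt_compat; nra).
  assert (Hc : 0 < c) by (unfold c; apply Rinv_0_lt_compat; nra).
  assert (E1 : 1/(2*(t+h)) - 1/(2*t) = - h * p) by (unfold p; field; lra).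
  assert (E2 : - (1/2) * (D/t)^2 = - D^2 * c) by (unfold c; field; lra).
  assert (E3 : c - p = c * h / (t + h)) by (unfold c, p; field; lra).
  assert (E4 : c * h / (t+h) <= c * h / t).
  { unfold Rdiv. apply Rmult_le_compat_l; [nra|]. apply Rinv_le_contravar; lra. }
  assert (E5 : c * t^2 = /2) by (unfold c; field; lra).
  rewrite E1 in H1, H2. rewrite E2.
  set (k := Δ / h).
  assert (Hk : Δ = k * h) by (unfold k; field; lra).
  rewrite Hk in H1, H2.
  assert (K1 : k <= - D^2 * p) by nra.
  assert (K2 : - a^2 * p <= k) by nra.
  assert (Hpc : p <= c) by (assert (0 <= c * h / (t+h)) by (unfold Rdiv; apply Rmult_le_pos; [nra| left; apply Rinv_0_lt_compat; lra]); lra).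
  assert (U1 : D^2 * (c - p) <= D^2 * (c * h / t)) by (apply Rmult_le_compat_l; nra).
  assert (U2 : D^2 * (c * h / t) * t^3 = D^2 * h / 2)
    by (unfold c; field; lra).
  assert (U3 : D^2 * (c * h / t) < eps / 2).
  { apply Rmult_lt_reg_r with (t^3); [apply pow_lt; lra|]. rewrite U2. nra. }
  assert (V1 : (a^2 - D^2) * c <= e * (2*D+1) * c) by (apply Rmult_le_compat_r; nra).
  assert (V2 : e * (2*D+1) * c <= eps * t^2 / 2 * c) by (apply Rmult_le_compat_r; lra).
  assert (V3 : eps * t^2 / 2 * c = eps / 4) by (unfold c; field; lra).
  assert (0 < eps) by nra.
  apply Rabs_def1; nra.
Qed.

Lemma left_alg t h D b e eps Δ :
  0 < t -> h < 0 -> t/2 <= t + h -> 0 <= b <= D -> D - e < b -> e <= 1 -> e * (2*D+1) <= eps * t^2 / 2 ->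
  (-h) * (D^2 + 1) < eps * t^3 / 2 ->
  - Δ <= b^2 * (1/(2*t) - 1/(2*(t+h))) -> D^2 * (1/(2*t) - 1/(2*(t+h))) <= - Δ ->
  Rabs (Δ / h - - (1/2) * (D/t)^2) < eps.
Proof.
  intros Ht Hh Hth Hb Hbe He1 He Hhe H1 H2.
  set (p := / (2*t*(t+h))). set (c := / (2*t^2)).
  assert (Hp : 0 < p) by (unfold p; apply Rinv_0_lt_compat; nra).
  assert (Hc : 0 < c) by (unfold c; apply Rinv_0_lt_compat; nra).
  assert (E1 : 1/(2*t) - 1/(2*(t+h)) = h * p) by (unfold p; field; lra).
  assert (E2 : - (1/2) * (D/t)^2 = - D^2 * c) by (unfold c; field; lra).
  assert (E3 : p - c = c * (-h) / (t + h)) by (unfold c, p; field; lra).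
  assert (E4 : c * (-h) / (t+h) <= c * (-h) / (t/2)).
  { unfold Rdiv. apply Rmult_le_compat_l; [nra|]. apply Rinv_le_contravar; lra. }
  rewrite E1 in H1, H2. rewrite E2.
  set (k := Δ / h).
  assert (Hk : Δ = k * h) by (unfold k; field; lra).
  rewrite Hk in H1, H2.
  assert (K1 : k <= - b^2 * p).
  { assert (0 <= (k + b^2 * p) * h) by lra.
    destruct (Rle_lt_dec (k + b^2*p) 0); [lra|]. assert ((k + b^2 * p) * h < 0) by nra. lra. }
  assert (K2 : - D^2 * p <= k).
  { assert ((k + D^2 * p) * h <= 0) by lra.
    destruct (Rle_lt_dec 0 (k + D^2*p)); [lra|]. assert (0 < (k + D^2 * p) * h) by nra. lra. }
  assert (Hpc : c <= p) by (assert (0 <= c * (-h) / (t+h)) by (unfold Rdiv; apply Rmult_le_pos; [nra| left; apply Rinv_0_lt_compat; lra]); lra).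
  assert (U1 : D^2 * (p - c) <= D^2 * (c * (-h) / (t/2))) by (apply Rmult_le_compat_l; nra).
  assert (U2 : D^2 * (c * (-h) / (t/2)) * t^3 = D^2 * (-h))
    by (unfold c; field; lra).
  assert (U3 : D^2 * (c * (-h) / (t/2)) < eps / 2).
  { apply Rmult_lt_reg_r with (t^3); [apply pow_lt; lra|]. rewrite U2.
    assert ((-h) * (D^2+1) = D^2 * (-h) + (-h)) by ring. lra. }
  assert (V1 : (D^2 - b^2) * c <= e * (2*D+1) * c) by (apply Rmult_le_compat_r; nra).
  assert (V2 : e * (2*D+1) * c <= eps * t^2 / 2 * c) by (apply Rmult_le_compat_r; lra).
  assert (V3 : eps * t^2 / 2 * c = eps / 4) by (unfold c; field; lra).
  assert (0 < eps) by nra.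
  apply Rabs_def1; nra.
Qed.

Lemma get_setting {X : Type} (d : X -> X -> R) f (x : X) :
  is_metric d -> compact_space d -> lipschitz d f -> exists Lf B, setting d f Lf B.
Proof.
  intros Hm Hc [L HL].
  destruct (diam_bound d x Hm Hc) as [B [HB Hd]].
  exists (Rabs L), B. repeat split; try apply Hm; auto.
  - apply Rabs_pos.
  - intros y z. eapply Rle_trans; [apply HL|]. apply Rmult_le_compat_r; [apply Hm| apply Rle_abs].
Qed.

Lemma slope_val {X : Type} (d : X -> X -> R) f Lf B t x :
  setting d f Lf B -> geodesic d -> 0 < t -> slope d (Q d f t) x = Dplus d f x t / t.
Proof.
  intros Hs Hg Ht. pose proof (slope_Q d f Lf B t x Hs Hg Ht) as H.
  unfold slope. apply (slope_unique d (Q d f t) x).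
  - apply epsilon_spec. exists (Dplus d f x t / t); exact H.
  - exact H.
Qed.

Theorem mainTheorem2 (X : Type) (d : X -> X -> R) (f : X -> R) :
  is_metric d -> compact_space d -> geodesic d -> lipschitz d f ->
  (forall x t, 0 < t -> is_slope d (Q d f t) x (Dplus d f x t / t)) /\
  (forall x, exists N : nat -> R,
     forall t, 0 < t -> (forall n, N n <> t) ->
       derivable_pt_lim (fun s => Q d f s x) t
         (- (1/2) * (slope d (Q d f t) x) ^ 2)).
Proof.
  intros Hm Hc Hg Hl. split.
  - intros x t Ht. destruct (get_setting d f x Hm Hc Hl) as [Lf [B Hs]].
    apply (slope_Q d f Lf B t x Hs Hg Ht).
  - intros x. destruct (get_setting d f x Hm Hc Hl) as [Lf [B Hs]].
    set (g := fun t => Dplus d f x t).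
    assert (Hmono : forall u s, 0 < u < s -> g u <= g s) by (apply mono_Dplus with Lf B; exact Hs).
    exists (Nseq g). intros t Ht HN.
    pose proof (Nseq_spec g t Hmono Ht HN) as Hnj.
    pose proof (cont_nojump g t Hmono Ht Hnj) as Hcont.
    rewrite (slope_val d f Lf B t x Hs Hg Ht).
    set (D := Dplus d f x t).
    assert (HD0 : 0 <= D).
    { destruct (Dplus_spec d f Lf B t x Hs Ht) as [[y [_ Hy]] _]. fold D in Hy. rewrite Hy. apply Hm. }
    assert (HDm : Defs.Dminus d f x t = D).
    { pose proof (Dminus_le_Dplus d f Lf B t x Hs Ht).
      apply Rle_antisym; [exact H|]. apply Rnot_lt_le; intro Hlt.
      destruct (Hcont (D - Defs.Dminus d f x t)) as [[u [Hu Hgu]] _]; [lra|].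
      pose proof (mono_pm d f Lf B x u t Hs Hu). unfold g in Hgu. fold D in Hgu. lra. }
    intros eps He.
    set (e := Rmin 1 (eps * t^2 / (2 * (2*D+1)))).
    assert (He0 : 0 < e).
    { unfold e. apply Rmin_glb_lt; [lra|]. apply Rdiv_lt_0_compat; [|lra].
      apply Rmult_lt_0_compat; [lra| apply pow_lt; lra]. }
    assert (He1 : e <= 1) by apply Rmin_l.
    assert (He2 : e * (2*D+1) <= eps * t^2 / 2).
    { assert (e <= eps * t^2 / (2 * (2*D+1))) by apply Rmin_r.
      apply Rmult_le_compat_r with (r := 2*D+1) in H; [|lra].
      replace (eps * t ^ 2 / (2 * (2 * D + 1)) * (2 * D + 1)) with (eps * t^2/2) in H by (field; lra).
      exact H. }
    destruct (Hcont e He0) as [[u0 [Hu0 Hgu0]] [s0 [Hs0 Hgs0]]].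
    unfold g in Hgu0, Hgs0. fold D in Hgu0, Hgs0.
    set (η := eps * t^3 / (2 * (D^2 + 1))).
    assert (Hη : 0 < η).
    { unfold η. apply Rdiv_lt_0_compat; [|nra]. apply Rmult_lt_0_compat; [lra| apply pow_lt; lra]. }
    set (δ := Rmin (t/2) (Rmin (t - u0) (Rmin (s0 - t) η))).
    assert (Hδ : 0 < δ).
    { unfold δ. repeat apply Rmin_glb_lt; lra. }
    assert (Hδ1 : δ <= t/2) by apply Rmin_l.
    assert (Hδ2 : δ <= t - u0) by (eapply Rle_trans; [apply Rmin_r| apply Rmin_l]).
    assert (Hδ3 : δ <= s0 - t) by (eapply Rle_trans; [apply Rmin_r| eapply Rle_trans; [apply Rmin_r| apply Rmin_l]]).
    assert (Hδ4 : δ <= η) by (eapply Rle_trans; [apply Rmin_r| eapply Rle_trans; [apply Rmin_r| apply Rmin_r]]).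
    exists (mkposreal δ Hδ). simpl. intros h Hh0 Hhδ.
    assert (Hhη : Rabs h * (D^2 + 1) < eps * t^3 / 2).
    { assert (Rabs h < η) by lra. assert (HD1 : 0 < D^2 + 1) by nra.
      apply Rmult_lt_compat_r with (r := D^2+1) in H; [|lra].
      replace (η * (D^2+1)) with (eps * t^3 / 2) in H by (unfold η; field; lra). exact H. }
    destruct (Rtotal_order h 0) as [Hneg|[Hz|Hpos]]; [| contradiction |].
    + rewrite Rabs_left in Hhδ, Hhη by lra.
      assert (Hu : 0 < t + h) by lra.
      assert (Hut : t + h < t) by lra.
      assert (Hu0u : u0 < t + h) by lra.
      set (u := t + h) in *.
      destruct (Dplus_spec d f Lf B u x Hs Hu) as [[yu [Hyu Hb]] _].
      destruct (Dminus_spec d f Lf B t x Hs Ht) as [[z [Hz Hz']] _].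
      rewrite HDm in Hz'.
      pose proof (q_upper d f Lf B x u t yu Hs Hu Ht Hyu) as Q1.
      pose proof (q_upper d f Lf B x t u z Hs Ht Hu Hz) as Q2.
      rewrite <- Hb in Q1. rewrite <- Hz' in Q2.
      pose proof (mono_pm d f Lf B x u t Hs (conj Hu Hut)) as M1.
      rewrite HDm in M1.
      pose proof (Hmono u0 u (conj (proj1 Hu0) Hu0u)) as M2.
      unfold g in M2.
      assert (Hb0 : 0 <= Dplus d f x u) by (rewrite Hb; apply Hm).
      apply (left_alg t h D (Dplus d f x u) e eps); try lra. all: unfold u in *; lra.
    + rewrite Rabs_right in Hhδ, Hhη by lra.
      assert (Hth : 0 < t + h) by lra.
      assert (Htt : t < t + h) by lra. assert (Hts0 : t + h < s0) by lra.
      destruct (Dplus_spec d f Lf B t x Hs Ht) as [[yt [Hyt Hyt']] _].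
      destruct (Dminus_spec d f Lf B (t+h) x Hs Hth) as [[z [Hz Hz']] _].
      pose proof (q_upper d f Lf B x t (t+h) yt Hs Ht Hth Hyt) as Q1.
      pose proof (q_upper d f Lf B x (t+h) t z Hs Hth Ht Hz) as Q2.
      fold D in Hyt'. rewrite <- Hyt' in Q1. rewrite <- Hz' in Q2.
      pose proof (mono_pm d f Lf B x t (t+h) Hs (conj Ht Htt)) as M1. fold D in M1.
      pose proof (Dminus_le_Dplus d f Lf B (t+h) x Hs Hth) as M2.
      pose proof (Hmono (t+h) s0 (conj Hth Hts0)) as M3. unfold g in M3.
      apply (right_alg t h D (Defs.Dminus d f x (t+h)) e eps); try lra.
Qed.
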